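(* Let $A$ be a JBW algebra, let $p,q\in A$ be nonzero projections with $p\circ q=0$, and let $z\in A$ be a nonzero projection different from $p$ and from $q$. Then $z=p+q$ if and only if the linear span of $\{p,q,z\}$ is a two-dimensional associative subalgebra of $A$.
   Context: A JB algebra is a real Banach algebra $(A,\circ)$ with a commutative product satisfying $a\circ(b\circ a^2)=(a\circ b)\circ a^2$, $\|a^2\|\le\|a^2+b^2\|$, $\|a\|^2=\|a^2\|$; a JBW algebra is a JB algebra that is a dual Banach space. A projection is an element $p$ with $p\circ p=p$. *)

(* Defs.v *)
From HB Require Import structures.
From mathcomp Require Import all_boot all_order all_algebra.
From mathcomp Require Import all_classical all_reals all_analysis.
Set Implicit Arguments. Unset Strict Implicit. Unset Printing Implicit Defensive.
Import Order.TTheory GRing.Theory Num.Theory.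
Import numFieldNormedType.Exports.
Local Open Scope classical_set_scope.
Local Open Scope ring_scope.

Record JBalgebra (R : realType) (A : completeNormedModType R) := {
  jmul : A -> A -> A;
  jmul_linear : forall (c : R) (x y w : A),
      jmul (c *: x + y) w = c *: jmul x w + jmul y w;
  jmul_comm : forall x y : A, jmul x y = jmul y x;
  jmul_norm : forall x y : A, `|jmul x y| <= `|x| * `|y|;
  jmul_jordan : forall a b : A,
      jmul a (jmul b (jmul a a)) = jmul (jmul a b) (jmul a a);
  jmul_norm_sq_le : forall a b : A,
      `|jmul a a| <= `|jmul a a + jmul b b|;
  jmul_norm_sq : forall a : A, `|a| ^+ 2 = `|jmul a a|
}.

(* A is a dual Banach space: there is a normed space X such that A is
   isometrically (linearly) isomorphic to the dual X^* of bounded linear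
   functionals on X, the norm on X^* being the usual operator norm. *)
Definition dual_Banach_space (R : realType) (A : completeNormedModType R) : Prop :=
  exists (X : normedModType R) (f : A -> X -> R),
    (forall a (c : R) (x y : X), f a (c *: x + y) = c * f a x + f a y) /\
    (forall (c : R) (a b : A) x, f (c *: a + b) x = c * f a x + f b x) /\
    (forall a x, `|f a x| <= `|a| * `|x|) /\
    (forall a, `|a| = sup [set `|f a x| | x in [set x : X | `|x| <= 1]]) /\
    (forall g : X -> R,
        (forall (c : R) (x y : X), g (c *: x + y) = c * g x + g y) ->
        (exists M : R, forall x, `|g x| <= M * `|x|) ->
        exists a : A, forall x, f a x = g x).

Definition JBW_algebra (R : realType) (A : completeNormedModType R)
    (J : JBalgebra A) : Prop := dual_Banach_space A.

Definition is_projection (R : realType) (A : completeNormedModType R)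
    (J : JBalgebra A) (p : A) : Prop := jmul J p p = p.

Definition span3 (R : realType) (A : completeNormedModType R) (p q z : A) : set A :=
  [set x | exists a b c : R, x = a *: p + b *: q + c *: z].

Definition is_subalgebra (R : realType) (A : completeNormedModType R)
    (J : JBalgebra A) (S : set A) : Prop :=
  S 0 /\ (forall (c : R) x y, S x -> S y -> S (c *: x + y)) /\
  (forall x y, S x -> S y -> S (jmul J x y)).

Definition is_associative_on (R : realType) (A : completeNormedModType R)
    (J : JBalgebra A) (S : set A) : Prop :=
  forall x y w, S x -> S y -> S w ->
    jmul J (jmul J x y) w = jmul J x (jmul J y w).

Definition dim2 (R : realType) (A : completeNormedModType R) (S : set A) : Prop :=
  exists u v : A, S u /\ S v /\
    (forall a b : R, a *: u + b *: v = 0 -> a = 0 /\ b = 0) /\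
    (forall x, S x -> exists a b : R, x = a *: u + b *: v).

(* Main.v *)
Require Import Defs.
From HB Require Import structures.
From mathcomp Require Import all_boot all_order all_algebra.
From mathcomp Require Import all_classical all_reals all_analysis.
From mathcomp Require Import ring.
Import Order.TTheory GRing.Theory Num.Theory.
Import numFieldNormedType.Exports.
Local Open Scope classical_set_scope.
Local Open Scope ring_scope.

Section Aux.
Variables (R : realType) (A : completeNormedModType R) (J : JBalgebra A).

Lemma jm0l w : jmul J 0 w = 0.
Proof.
have := jmul_linear J 1 0 0 w; rewrite scaler0 addr0 scale1r => h.
by apply/(addrI (jmul J 0 w)); rewrite addr0 -h.
Qed.

Lemma jmZl c x w : jmul J (c *: x) w = c *: jmul J x w.
Proof. by have := jmul_linear J c x 0 w; rewrite addr0 jm0l addr0. Qed.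

Lemma jmDl x y w : jmul J (x + y) w = jmul J x w + jmul J y w.
Proof. by have := jmul_linear J 1 x y w; rewrite !scale1r. Qed.

Lemma jmZr c x w : jmul J w (c *: x) = c *: jmul J w x.
Proof. by rewrite jmul_comm jmZl jmul_comm. Qed.

Lemma jmDr x y w : jmul J w (x + y) = jmul J w x + jmul J w y.
Proof. by rewrite jmul_comm jmDl !(jmul_comm J w). Qed.

Lemma comb2 (u v : A) c a b c' a' b' :
  c *: (a *: u + b *: v) + c' *: (a' *: u + b' *: v) =
  (c * a + c' * a') *: u + (c * b + c' * b') *: v.
Proof.
by rewrite !scalerDr !scalerA !scalerDl addrACA.
Qed.

Variables (p q : A).
Hypotheses (hp : jmul J p p = p) (hq : jmul J q q = q) (hpq : jmul J p q = 0)
  (p0 : p != 0) (q0 : q != 0).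

Lemma prod2 s t s' t' :
  jmul J (s *: p + t *: q) (s' *: p + t' *: q) = (s * s') *: p + (t * t') *: q.
Proof.
rewrite jmDl !jmZl !jmDr !jmZr hp hq hpq jmul_comm hpq !scaler0 addr0 add0r.
by rewrite !scalerA.
Qed.

Lemma indep a b : a *: p + b *: q = 0 -> a = 0 /\ b = 0.
Proof.
move=> h.
have h1 := congr1 (fun x => jmul J x p) h.
have h2 := congr1 (fun x => jmul J x q) h.
move: h1 h2 => /=; rewrite !jmDl !jmZl hp hq hpq jmul_comm hpq !jm0l.
rewrite !scaler0 addr0 add0r => /eqP; rewrite scaler_eq0 (negbTE p0) orbF => /eqP ->.
by move=> /eqP; rewrite scaler_eq0 (negbTE q0) orbF => /eqP ->.
Qed.

End Aux.

Theorem lemma3p4 (R : realType) (A : completeNormedModType R) (J : JBalgebra A)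
  (hJBW : JBW_algebra J) (p q z : A) :
  is_projection J p -> p != 0 ->
  is_projection J q -> q != 0 ->
  jmul J p q = 0 ->
  is_projection J z -> z != 0 -> z != p -> z != q ->
  (z = p + q <->
   [/\ is_subalgebra J (span3 p q z),
       is_associative_on J (span3 p q z)
     & dim2 (span3 p q z)]).
Proof.
rewrite /is_projection => hp p0 hq q0 hpq hz z0 zp zq; split.
- move=> ->.
  have hS : forall x, span3 p q (p + q) x <-> exists s t : R, x = s *: p + t *: q.
    move=> x; split.
    + case=> a [b [c ->]]; exists (a + c), (b + c).
      by rewrite scalerDr !scalerDl addrACA.
    + case=> s [t ->]; exists s, t, 0; by rewrite scale0r addr0.
  split.
  + split; [|split].
    * apply/hS; exists 0, 0; by rewrite !scale0r addr0.
    * move=> c x y /hS [s [t ->]] /hS [s' [t' ->]]; apply/hS.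
      exists (c * s + s'), (c * t + t').
      by rewrite scalerDr !scalerA !scalerDl addrACA.
    * move=> x y /hS [s [t ->]] /hS [s' [t' ->]]; apply/hS.
      exists (s * s'), (t * t'); exact: (@prod2 _ _ J p q hp hq hpq).
  + move=> x y w /hS [s [t ->]] /hS [s' [t' ->]] /hS [s'' [t'' ->]].
    by rewrite !(@prod2 _ _ J p q hp hq hpq) !mulrA.
  + exists p, q; split; [apply/hS; exists 1, 0|split; [apply/hS; exists 0, 1|split]].
    * by rewrite scale0r scale1r addr0.
    * by rewrite scale0r scale1r add0r.
    * exact: (@indep _ _ J p q hp hq hpq p0 q0).
    * move=> x /hS [s [t ->]]; by exists s, t.
- case=> _ _ [u [v [_ [_ [_ hx]]]]].
  have sp : span3 p q z p by exists 1, 0, 0; rewrite !scale0r !addr0 scale1r.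
  have sq : span3 p q z q by exists 0, 1, 0; rewrite !scale0r addr0 add0r scale1r.
  have sz : span3 p q z z by exists 0, 0, 1; rewrite !scale0r !add0r scale1r.
  have [a1 [b1 ep]] := hx p sp.
  have [a2 [b2 eq]] := hx q sq.
  have [a3 [b3 ez]] := hx z sz.
  pose d := a1 * b2 - a2 * b1.
  have d0 : d != 0.
    apply/negP => /eqP d0.
    have e1 : b2 *: p + (- b1) *: q = 0.
      rewrite ep eq comb2.
      have -> : b2 * a1 + - b1 * a2 = d by rewrite /d; ring.
      rewrite d0 scale0r add0r.
      have -> : b2 * b1 + - b1 * b2 = 0 by ring.
      by rewrite scale0r.
    have e2 : (- a2) *: p + a1 *: q = 0.
      rewrite ep eq comb2.
      have -> : - a2 * b1 + a1 * b2 = d by rewrite /d; ring.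
      rewrite d0 scale0r addr0.
      have -> : - a2 * a1 + a1 * a2 = 0 by ring.
      by rewrite scale0r.
    have [h1 h2] := @indep _ _ J p q hp hq hpq p0 q0 _ _ e1.
    have [h3 h4] := @indep _ _ J p q hp hq hpq p0 q0 _ _ e2.
    move: p0; rewrite ep h4.
    have -> : b1 = 0 by rewrite -(opprK b1) h2 oppr0.
    by rewrite !scale0r addr0 eqxx.
  pose al := (a3 * b2 - b3 * a2) / d.
  pose be := (b3 * a1 - a3 * b1) / d.
  have ez2 : z = al *: p + be *: q.
    rewrite ez ep eq comb2 /al /be; congr (_ *: _ + _ *: _).
    + rewrite /d; field; exact: d0.
    + rewrite /d; field; exact: d0.
  have := hz; rewrite ez2 (@prod2 _ _ J p q hp hq hpq) => /eqP; rewrite -subr_eq0.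
  rewrite opprD addrACA -!scalerBl => /eqP /(@indep _ _ J p q hp hq hpq p0 q0 _ _) [ha hb].
  have sol : forall x : R, x * x - x = 0 -> x = 0 \/ x = 1.
    move=> x hx0; have : x * (x - 1) == 0 by rewrite mulrBr mulr1 hx0.
    rewrite mulf_eq0 subr_eq0.
    by case/orP => /eqP ->; [left|right].
  clearbody al be.
  case: (sol _ ha) => ea; case: (sol _ hb) => eb; rewrite ea eb in ez2 *.
  - move: z0; rewrite ez2 !scale0r addr0 eqxx. by [].
  - move: zq; rewrite ez2 scale0r scale1r add0r eqxx. by [].
  - move: zp; rewrite ez2 scale0r scale1r addr0 eqxx. by [].
  - rewrite !scale1r. by [].
Qed.
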